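(* Let $\alpha,\beta>0$ with $\beta>\alpha$, and let $S_0,I_0$ satisfy $S_0>I_0>0$, $S_0+I_0=1$ and $S_0>\alpha/\beta$. Let $(S(t),I(t),R(t))$ be the solution of $$\dot S=-\frac{\beta SI}{S+I},\qquad \dot I=\frac{\beta SI}{S+I}-\alpha I,\qquad \dot R=\alpha I$$ with $S(0)=S_0$, $I(0)=I_0$, $R(0)=0$. Then any two of the curves $S(t)$, $I(t)$, $R(t)$ (for $t>0$) intersect exactly once. Furthermore, letting $t_{\mathrm{peak}}>0$ denote the time at which $I(t)$ attains its maximum: (i) the curves $S(t)$ and $I(t)$ intersect before $t_{\mathrm{peak}}$ if $\beta>2\alpha$, exactly at $t_{\mathrm{peak}}$ if $\beta=2\alpha$, and after $t_{\mathrm{peak}}$ if $\beta<2\alpha$; (ii) the three curves $S(t)$, $I(t)$, $R(t)$ intersect in a common point if and only if $\frac{\beta}{\alpha}<\frac{\log 3}{\log 3-\log 2}$ and $S_0=\frac13\left(\frac32\right)^{\beta/\alpha}$; (iii) the three curves intersect in a common point located at $t=t_{\mathrm{peak}}$ if and only if $\beta=2\alpha$ and $S_0=\frac34$.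
   Context: Modified SIR epidemiological model with recovery rate $\alpha$ and transmission rate $\beta$; $S,I,R$ are fractions of susceptible, infective and removed individuals, with total population $S+I+R=1$. *)

(* Defs.v *)
From Stdlib Require Import Reals.
From Coquelicot Require Import Coquelicot.
Open Scope R_scope.

Definition SIR_solution (alpha beta S0 I0 : R) (S I Rm : R -> R) : Prop :=
  S 0 = S0 /\ I 0 = I0 /\ Rm 0 = 0 /\
  filterlim S (at_right 0) (locally S0) /\
  filterlim I (at_right 0) (locally I0) /\
  filterlim Rm (at_right 0) (locally 0) /\
  (forall t, 0 < t ->
     is_derive S t (- (beta * S t * I t / (S t + I t))) /\
     is_derive I t (beta * S t * I t / (S t + I t) - alpha * I t) /\
     is_derive Rm t (alpha * I t)).

Definition is_peak_time (I : R -> R) (tp : R) : Prop :=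
  0 < tp /\ forall t, 0 <= t -> I t <= I tp.

Definition meet_exactly_once (f g : R -> R) : Prop :=
  exists t, (0 < t /\ f t = g t) /\ forall t', 0 < t' /\ f t' = g t' -> t' = t.

(* Main.v *)
Require Import Defs.
From Stdlib Require Import Reals.
From Coquelicot Require Import Coquelicot.
From Stdlib Require Import Lra Classical_Prop.
Open Scope R_scope.
Ltac toR := match goal with |- ?a = ?b => change (@eq R a b) end.

Lemma ball_R (x e y : R) : ball x e y <-> Rabs (y - x) < e.
Proof. split; intro H; exact H. Qed.

Lemma deriv_cont (f : R -> R) t l : is_derive f t l -> continuity_pt f t.
Proof.
  intro H. apply continuity_pt_filterlim. apply (ex_derive_continuous (K:=R_AbsRing) (V:=R_NormedModule)).
  exists l. exact H.
Qed.

Lemma deriv_zero_const (f : R -> R) a b :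
  (forall t, a < t < b -> is_derive f t 0) ->
  forall x y, a < x < b -> a < y < b -> f x = f y.
Proof.
  intros H x y Hx Hy.
  destruct (MVT_gen f x y (fun _ => 0)) as [c [Hc E]].
  - intros z Hz. apply H. split.
    + apply Rle_lt_trans with (Rmin x y); [apply Rmin_glb; lra| lra].
    + apply Rlt_le_trans with (Rmax x y); [lra| apply Rmax_lub; lra].
  - intros z Hz. apply (deriv_cont _ _ 0). apply H. split.
    + apply Rlt_le_trans with (Rmin x y); [apply Rmin_glb_lt; lra| lra].
    + apply Rle_lt_trans with (Rmax x y); [lra| apply Rmax_lub_lt; lra].
  - lra.
Qed.

Lemma right_lim_const (f : R -> R) C L T : 0 < T ->
  (forall t, 0 < t < T -> f t = C) ->
  filterlim f (at_right 0) (locally L) -> C = L.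
Proof.
  intros HT H Hl.
  assert (Hc : filterlim (fun _ => C) (at_right 0) (locally L)).
  { apply filterlim_ext_loc with f; [|exact Hl].
    exists (mkposreal T HT). intros y Hy Hy0. apply H.
    assert (Hy1 : Rabs (y - 0) < T) by exact Hy. rewrite Rminus_0_r in Hy1. apply Rabs_def2 in Hy1. lra. }
  apply (@filterlim_locally_unique R R_AbsRing R_NormedModule (at_right 0) (Proper_StrongProper _ (at_right_proper_filter 0)) (fun _ : R => C)); [|exact Hc].
  apply filterlim_const.
Qed.

Lemma left_agree (f g : R -> R) a x : a < x ->
  continuity_pt f x -> continuity_pt g x ->
  (forall t, a < t < x -> f t = g t) -> f x = g x.
Proof.
  intros Hax Hf Hg H.
  destruct (Req_dec (f x) (g x)) as [E|NE]; [exact E|exfalso].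
  assert (He : 0 < Rabs (f x - g x) / 2).
  { apply Rdiv_lt_0_compat; [apply Rabs_pos_lt; lra| lra]. }
  apply continuity_pt_filterlim in Hf. apply continuity_pt_filterlim in Hg.
  pose proof (proj1 (@filterlim_locally R_UniformSpace R_UniformSpace (locally x) _ f (f x)) Hf) as Hf'.
  pose proof (proj1 (@filterlim_locally R_UniformSpace R_UniformSpace (locally x) _ g (g x)) Hg) as Hg'.
  clear Hf Hg. rename Hf' into Hf. rename Hg' into Hg.
  destruct (Hf (mkposreal _ He)) as [d1 Hd1].
  destruct (Hg (mkposreal _ He)) as [d2 Hd2].
  set (d := Rmin (Rmin d1 d2) (x - a)).
  assert (Hd : 0 < d).
  { unfold d. apply Rmin_glb_lt; [apply Rmin_glb_lt; [apply cond_pos|apply cond_pos]|lra]. }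
  assert (Hd1' : d <= d1) by (unfold d; eapply Rle_trans; [apply Rmin_l|apply Rmin_l]).
  assert (Hd2' : d <= d2) by (unfold d; eapply Rle_trans; [apply Rmin_l|apply Rmin_r]).
  assert (Hd3' : d <= x - a) by (unfold d; apply Rmin_r).
  set (t := x - d / 2).
  assert (Bt : forall e : posreal, d <= e -> ball x e t).
  { intros e He'. apply ball_R. unfold t. replace (x - d/2 - x) with (-(d/2)) by ring.
    rewrite Rabs_Ropp. rewrite Rabs_pos_eq; lra. }
  specialize (Hd1 t (Bt d1 Hd1')). specialize (Hd2 t (Bt d2 Hd2')).
  apply ball_R in Hd1. apply ball_R in Hd2. simpl in Hd1, Hd2.
  rewrite (H t) in Hd1 by (unfold t; lra).
  assert (Rabs (f x - g x) <= Rabs (g t - f x) + Rabs (g t - g x)).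
  { replace (f x - g x) with (-(g t - f x) + (g t - g x)) by ring.
    eapply Rle_trans; [apply Rabs_triang|]. rewrite Rabs_Ropp. lra. }
  assert (A1 : Rabs (g t - f x) < Rabs (f x - g x) / 2) by exact Hd1.
  assert (A2 : Rabs (g t - g x) < Rabs (f x - g x) / 2) by exact Hd2.
  lra.
Qed.

Lemma D_eq (f : R -> R) x a b : is_derive f x a -> a = b -> is_derive f x b.
Proof. intros H E; subst; exact H. Qed.

Lemma D_plus (f g : R -> R) x a b : is_derive f x a -> is_derive g x b ->
  is_derive (fun t => f t + g t) x (a + b).
Proof. intros Hf Hg. exact (is_derive_plus f g x a b Hf Hg). Qed.

Lemma D_minus (f g : R -> R) x a b : is_derive f x a -> is_derive g x b ->
  is_derive (fun t => f t - g t) x (a - b).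
Proof. intros Hf Hg. exact (is_derive_minus f g x a b Hf Hg). Qed.

Lemma D_ln (f : R -> R) x a : is_derive f x a -> 0 < f x ->
  is_derive (fun t => ln (f t)) x (a / f x).
Proof. intros Hf Hp. pose proof (is_derive_comp ln f x _ _ (is_derive_ln (f x) Hp) Hf) as H.
  exact H. Qed.

Lemma D_lin c x : is_derive (fun t => c * t) x c.
Proof. pose proof (is_derive_scal (fun t => t) x c 1 (is_derive_id (K:=R_AbsRing) x)) as H.
  rewrite Rmult_1_r in H. exact H. Qed.

Lemma D_scal c (f : R -> R) x a : is_derive f x a -> is_derive (fun t => c * f t) x (c * a).
Proof. apply is_derive_scal. Qed.

Lemma right_cont (g : R -> R) : continuity_pt g 0 -> filterlim g (at_right 0) (locally (g 0)).
Proof.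
  intros H. apply continuity_pt_filterlim in H. intros P HP. apply H in HP.
  unfold filtermap, at_right, within. unfold filtermap in HP. revert HP. apply filter_imp. auto.
Qed.

Lemma lim_comp (f g : R -> R) L : filterlim f (at_right 0) (locally L) -> continuity_pt g L ->
  filterlim (fun t => g (f t)) (at_right 0) (locally (g L)).
Proof.
  intros Hf Hg. apply continuity_pt_filterlim in Hg. eapply filterlim_comp; eauto.
Qed.

Lemma lim_plus (f g : R -> R) a b : filterlim f (at_right 0) (locally a) ->
  filterlim g (at_right 0) (locally b) ->
  filterlim (fun t => f t + g t) (at_right 0) (locally (a + b)).
Proof.
  intros Hf Hg. apply (filterlim_comp_2 f g Rplus Hf Hg). apply (filterlim_plus (K:=R_AbsRing) (V:=R_NormedModule) a b).
Qed.

Lemma lim_minus (f g : R -> R) a b : filterlim f (at_right 0) (locally a) ->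
  filterlim g (at_right 0) (locally b) ->
  filterlim (fun t => f t - g t) (at_right 0) (locally (a - b)).
Proof.
  intros Hf Hg. apply (lim_plus f (fun t => - g t)); auto.
  apply (lim_comp g Ropp b Hg). apply continuity_pt_opp. apply continuity_pt_id.
Qed.

Lemma ln_cont x : 0 < x -> continuity_pt ln x.
Proof. intro H. apply continuity_pt_filterlim. apply continuous_ln. exact H. Qed.

Definition wf (S0 I0 c t : R) := I0 * exp (c * t) + S0.
Definition Pw (k v : R) := exp (- k * ln v).

Lemma wf_pos S0 I0 c t : 0 < S0 -> 0 < I0 -> 0 < wf S0 I0 c t.
Proof. intros. unfold wf. pose proof (exp_pos (c*t)). nra. Qed.

Lemma wf_deriv S0 I0 c t : is_derive (wf S0 I0 c) t (I0 * (c * exp (c * t))).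
Proof. unfold wf. auto_derive; auto. ring. Qed.

Lemma wf_cont S0 I0 c t : continuity_pt (wf S0 I0 c) t.
Proof. exact (deriv_cont _ _ _ (wf_deriv S0 I0 c t)). Qed.

Lemma formulas_on alpha beta S0 I0 S I Rm T :
  0 < alpha -> alpha < beta -> 0 < I0 -> 0 < S0 -> S0 + I0 = 1 ->
  SIR_solution alpha beta S0 I0 S I Rm -> 0 < T ->
  (forall t, 0 < t < T -> 0 < S t /\ 0 < I t) ->
  forall t, 0 < t < T ->
    S t = S0 * Pw (beta / (beta - alpha)) (wf S0 I0 (beta - alpha) t) /\
    I t = I0 * exp ((beta - alpha) * t) * Pw (beta / (beta - alpha)) (wf S0 I0 (beta - alpha) t).
Proof.
  intros Ha Hab HI0 HS0 Hsum Hsol HT Hpos.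
  destruct Hsol as [_ [_ [_ [LS [LI [LR HD]]]]]].
  set (c := beta - alpha). assert (Hc : 0 < c) by (unfold c; lra).
  set (k := beta / c).
  set (F1 := fun t => ln (S t) - ln (I t) + c * t).
  assert (D1 : forall t, 0 < t < T -> is_derive F1 t 0).
  { intros t Ht. destruct (Hpos t Ht) as [Sp Ip]. destruct (HD t (proj1 Ht)) as [dS [dI _]].
    unfold F1. eapply D_eq.
    - apply D_plus; [apply D_minus; apply D_ln; eauto|apply D_lin].
    - toR. unfold c. field. repeat split; apply Rgt_not_eq; lra. }
  assert (C1 : forall t, 0 < t < T -> F1 t = ln S0 - ln I0).
  { intros t Ht. rewrite (deriv_zero_const F1 0 T D1 t (T/2)) by lra.
    apply (right_lim_const F1 _ _ T HT).
    - intros s Hs. apply (deriv_zero_const F1 0 T D1); lra.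
    - replace (ln S0 - ln I0) with (ln S0 - ln I0 + c * 0) by ring.
      unfold F1. apply lim_plus; [apply lim_minus|].
      + apply (lim_comp S ln); auto. apply ln_cont; exact HS0.
      + apply (lim_comp I ln); auto. apply ln_cont; exact HI0.
      + apply (right_cont (fun t => c * t)). apply continuity_pt_mult; [apply continuity_pt_const; intros ? ?; reflexivity|apply continuity_pt_id]. }
  assert (Irel : forall t, 0 < t < T -> I t = I0 * exp (c * t) * S t / S0).
  { intros t Ht. destruct (Hpos t Ht) as [Sp Ip]. pose proof (C1 t Ht) as E. unfold F1 in E.
    assert (E2 : ln (I t) = ln (S t) + c * t + ln I0 - ln S0) by lra.
    rewrite <- (exp_ln (I t)) by exact Ip. rewrite E2.
    unfold Rminus. rewrite !exp_plus, exp_Ropp.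
    rewrite (exp_ln (S t)) by lra. rewrite (exp_ln I0) by lra. rewrite (exp_ln S0) by lra.
    field. apply Rgt_not_eq. lra. }
  set (F2 := fun t => ln (S t) + k * ln (wf S0 I0 c t)).
  assert (D2 : forall t, 0 < t < T -> is_derive F2 t 0).
  { intros t Ht. destruct (Hpos t Ht) as [Sp Ip]. destruct (HD t (proj1 Ht)) as [dS [dI _]].
    unfold F2. eapply D_eq.
    - apply D_plus; [apply D_ln; eauto|apply D_scal; apply D_ln; [apply wf_deriv|apply wf_pos; auto]].
    - toR. rewrite (Irel t Ht). unfold wf, k. unfold c. pose proof (exp_pos ((beta - alpha) * t)).
      assert (0 < I0 * exp ((beta - alpha) * t) * S t) by (repeat apply Rmult_lt_0_compat; lra). assert (0 < S t * S0) by (apply Rmult_lt_0_compat; lra).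
      assert (0 < I0 * exp ((beta - alpha) * t)) by (apply Rmult_lt_0_compat; lra).
      field. repeat split; apply Rgt_not_eq; lra. }
  assert (W0 : wf S0 I0 c 0 = 1) by (unfold wf; rewrite Rmult_0_r, exp_0; lra).
  assert (C2 : forall t, 0 < t < T -> F2 t = ln S0).
  { intros t Ht. rewrite (deriv_zero_const F2 0 T D2 t (T/2)) by lra.
    replace (ln S0) with (ln S0 + k * ln (wf S0 I0 c 0)) by (rewrite W0, ln_1; ring).
    apply (right_lim_const F2 _ _ T HT).
    - intros s Hs. apply (deriv_zero_const F2 0 T D2); lra.
    - unfold F2. apply lim_plus.
      + apply (lim_comp S ln); auto. apply ln_cont; exact HS0.
      + apply (lim_comp (wf S0 I0 c) (fun u => k * ln u)).
        * apply right_cont. apply wf_cont.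
        * rewrite W0. apply (deriv_cont _ _ (k * / 1)). auto_derive; [lra|ring]. }
  intros t Ht. destruct (Hpos t Ht) as [Sp Ip].
  assert (ES : S t = S0 * Pw k (wf S0 I0 c t)).
  { pose proof (C2 t Ht) as E. unfold F2 in E.
    rewrite <- (exp_ln (S t)) by exact Sp.
    replace (ln (S t)) with (ln S0 + (- k * ln (wf S0 I0 c t))) by lra.
    rewrite exp_plus, exp_ln by exact HS0. reflexivity. }
  split; [exact ES|]. rewrite (Irel t Ht), ES. field. lra.
Qed.

Lemma ex_deriv_cont (f : R -> R) x : ex_derive f x -> continuity_pt f x.
Proof. intros [l H]. exact (deriv_cont f x l H). Qed.

Lemma cont_pos (f : R -> R) x : continuity_pt f x -> 0 < f x ->
  exists d, 0 < d /\ forall t, Rabs (t - x) < d -> 0 < f t.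
Proof.
  intros Hf Hp. apply continuity_pt_filterlim in Hf.
  pose proof (proj1 (@filterlim_locally R_UniformSpace R_UniformSpace (locally x) _ f (f x)) Hf (mkposreal _ Hp)) as [d Hd].
  exists d. split; [apply cond_pos|]. intros t Ht.
  assert (B : Rabs (f t - f x) < f x) by exact (Hd t Ht).
  apply Rabs_def2 in B. lra.
Qed.

Lemma right_pos (f : R -> R) L : filterlim f (at_right 0) (locally L) -> 0 < L ->
  exists d, 0 < d /\ forall t, 0 < t < d -> 0 < f t.
Proof.
  intros Hf Hp.
  pose proof (proj1 (@filterlim_locally R R_UniformSpace (at_right 0) _ f L) Hf (mkposreal _ Hp)) as [d Hd].
  exists d. split; [apply cond_pos|]. intros t Ht.
  assert (Bt : ball 0 d t). { apply ball_R. rewrite Rminus_0_r, Rabs_pos_eq; lra. }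
  assert (B : Rabs (f t - L) < L) by exact (Hd t Bt (proj1 Ht)).
  apply Rabs_def2 in B. lra.
Qed.

Lemma positivity alpha beta S0 I0 S I Rm :
  0 < alpha -> alpha < beta -> 0 < I0 -> 0 < S0 -> S0 + I0 = 1 ->
  SIR_solution alpha beta S0 I0 S I Rm ->
  forall t, 0 < t -> 0 < S t /\ 0 < I t.
Proof.
  intros Ha Hab HI0 HS0 Hsum Hsol.
  pose proof Hsol as Hsol'.
  destruct Hsol' as [_ [_ [_ [LS [LI [LR HD]]]]]].
  destruct (right_pos S S0 LS HS0) as [d1 [Hd1 P1]].
  destruct (right_pos I I0 LI HI0) as [d2 [Hd2 P2]].
  set (d := Rmin d1 d2).
  assert (Hd : 0 < d) by (apply Rmin_glb_lt; lra).
  assert (Hdd1 : d <= d1) by apply Rmin_l. assert (Hdd2 : d <= d2) by apply Rmin_r.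
  set (Bd := fun b => 0 < b /\ (S b <= 0 \/ I b <= 0)).
  intros t Ht. apply Classical_Prop.NNPP. intro Hn.
  assert (Bt : Bd t).
  { split; [exact Ht|]. destruct (Rle_dec (S t) 0); [left; exact r|].
    destruct (Rle_dec (I t) 0) as [r0|r0]; [right; exact r0|]. exfalso; apply Hn; split; lra. }
  set (L := fun x => forall b, Bd b -> x <= b).
  assert (BdL : forall b, Bd b -> d <= b).
  { intros b [Hb Hb2]. destruct (Rlt_le_dec b d) as [Hlt|Hle]; [|exact Hle].
    exfalso. pose proof (P1 b ltac:(lra)). pose proof (P2 b ltac:(lra)). lra. }
  destruct (completeness L) as [m [Hm1 Hm2]].
  { exists t. intros x Hx. apply Hx. exact Bt. }
  { exists 0. intros b [Hb _]. lra. }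
  assert (Hdm : d <= m) by (apply Hm1; exact BdL).
  assert (Hmb : forall b, Bd b -> m <= b).
  { intros b Hb. apply Hm2. intros x Hx. apply Hx. exact Hb. }
  assert (Hposm : forall s, 0 < s < m -> 0 < S s /\ 0 < I s).
  { intros s Hs. destruct (Rle_dec (S s) 0) as [r|r].
    - exfalso. pose proof (Hmb s (conj (proj1 Hs) (or_introl r))). lra.
    - destruct (Rle_dec (I s) 0) as [r0|r0].
      + exfalso. pose proof (Hmb s (conj (proj1 Hs) (or_intror r0))). lra.
      + split; lra. }
  pose proof (formulas_on alpha beta S0 I0 S I Rm m Ha Hab HI0 HS0 Hsum Hsol ltac:(lra) Hposm) as Fm.
  destruct (HD m ltac:(lra)) as [dS [dI _]].
  set (k := beta / (beta - alpha)). set (c := beta - alpha).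
  assert (Sm : S m = S0 * Pw k (wf S0 I0 c m)).
  { pose proof (left_agree S (fun s => S0 * Pw k (wf S0 I0 c s)) 0 m) as LA. cbv beta in LA. apply LA; [lra| | |].
    - exact (deriv_cont _ _ _ dS).
    - apply ex_deriv_cont.
      unfold Pw, wf. auto_derive. pose proof (exp_pos (c * m)). nra.
    - intros s Hs. exact (proj1 (Fm s Hs)). }
  assert (Im : I m = I0 * exp (c * m) * Pw k (wf S0 I0 c m)).
  { pose proof (left_agree I (fun s => I0 * exp (c * s) * Pw k (wf S0 I0 c s)) 0 m) as LA. cbv beta in LA. apply LA; [lra| | |].
    - exact (deriv_cont _ _ _ dI).
    - apply ex_deriv_cont.
      unfold Pw, wf. auto_derive. pose proof (exp_pos (c * m)). nra.
    - intros s Hs. exact (proj2 (Fm s Hs)). }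
  assert (Smp : 0 < S m). { rewrite Sm. unfold Pw. pose proof (exp_pos (- k * ln (wf S0 I0 c m))). nra. }
  assert (Imp : 0 < I m). { rewrite Im. unfold Pw. pose proof (exp_pos (- k * ln (wf S0 I0 c m))).
    pose proof (exp_pos (c * m)). apply Rmult_lt_0_compat; [apply Rmult_lt_0_compat|]; lra. }
  destruct (cont_pos S m (deriv_cont _ _ _ dS) Smp) as [e1 [He1 Q1]].
  destruct (cont_pos I m (deriv_cont _ _ _ dI) Imp) as [e2 [He2 Q2]].
  set (e := Rmin e1 e2).
  assert (He : 0 < e) by (apply Rmin_glb_lt; lra).
  assert (Hee1 : e <= e1) by apply Rmin_l. assert (Hee2 : e <= e2) by apply Rmin_r.
  assert (Le : L (m + e)).
  { intros b Hb. pose proof (Hmb b Hb) as Hmb'. destruct (Rlt_le_dec b (m + e)) as [Hlt|Hle]; [|exact Hle].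
    exfalso. destruct Hb as [_ Hb].
    assert (Rabs (b - m) < e) by (rewrite Rabs_pos_eq; lra).
    pose proof (Q1 b ltac:(lra)). pose proof (Q2 b ltac:(lra)). lra. }
  pose proof (Hm1 _ Le). lra.
Qed.

Lemma formulas alpha beta S0 I0 S I Rm :
  0 < alpha -> alpha < beta -> 0 < I0 -> 0 < S0 -> S0 + I0 = 1 ->
  SIR_solution alpha beta S0 I0 S I Rm ->
  forall t, 0 <= t ->
    S t = S0 * Pw (beta / (beta - alpha)) (wf S0 I0 (beta - alpha) t) /\
    I t = I0 * exp ((beta - alpha) * t) * Pw (beta / (beta - alpha)) (wf S0 I0 (beta - alpha) t) /\
    Rm t = 1 - S t - I t.
Proof.
  intros Ha Hab HI0 HS0 Hsum Hsol t Ht.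
  pose proof (positivity alpha beta S0 I0 S I Rm Ha Hab HI0 HS0 Hsum Hsol) as Hp.
  pose proof Hsol as Hsol'.
  destruct Hsol' as [E0 [E1 [E2 [LS [LI [LR HD]]]]]].
  destruct (Rle_lt_or_eq_dec 0 t Ht) as [Htp|Ht0].
  - destruct (formulas_on alpha beta S0 I0 S I Rm (t+1) Ha Hab HI0 HS0 Hsum Hsol ltac:(lra)
      (fun s Hs => Hp s (proj1 Hs)) t ltac:(lra)) as [F1 F2].
    split; [exact F1|split; [exact F2|]].
    set (G := fun s => S s + I s + Rm s).
    assert (DG : forall s, 0 < s < t + 1 -> is_derive G s 0).
    { intros s Hs. destruct (HD s (proj1 Hs)) as [dS [dI dR]]. unfold G.
      eapply D_eq; [apply D_plus; [apply D_plus|]; eauto|]. toR. ring. }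
    assert (G t = 1).
    { apply (right_lim_const G (G t) 1 (t+1)); [lra| |].
      - intros s Hs. apply (deriv_zero_const G 0 (t+1) DG); lra.
      - rewrite <- Hsum. replace (S0 + I0) with (S0 + I0 + 0) by ring.
        unfold G. apply lim_plus; [apply lim_plus|]; auto. }
    unfold G in H. lra.
  - subst t. rewrite E0, E1, E2. unfold Pw, wf.
    rewrite Rmult_0_r, exp_0, Rmult_1_r, Rplus_comm, Hsum, ln_1, Rmult_0_r, exp_0.
    split; [ring|split; lra].
Qed.

Lemma mvt (f df : R -> R) a b : a < b -> (forall x, a <= x <= b -> is_derive f x (df x)) ->
  exists c, a < c < b /\ f b - f a = df c * (b - a).
Proof.
  intros Hab H. destruct (MVT_cor2 f df a b Hab) as [c [E Hc]].
  - intros c Hc. apply is_derive_Reals. apply H. exact Hc.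
  - exists c. split; [exact Hc|exact E].
Qed.

Lemma wf_lt S0 I0 c t1 t2 : 0 < I0 -> 0 < c -> t1 < t2 -> wf S0 I0 c t1 < wf S0 I0 c t2.
Proof.
  intros HI Hc Ht. unfold wf. apply Rplus_lt_compat_r. apply Rmult_lt_compat_l; [exact HI|].
  apply exp_increasing. nra.
Qed.

Lemma wf_le S0 I0 c t1 t2 : 0 < I0 -> 0 < c -> t1 <= t2 -> wf S0 I0 c t1 <= wf S0 I0 c t2.
Proof.
  intros HI Hc Ht. destruct (Rle_lt_or_eq_dec _ _ Ht) as [h|h].
  - left. apply wf_lt; auto.
  - subst. lra.
Qed.

Lemma wf_inj S0 I0 c t1 t2 : 0 < I0 -> 0 < c -> wf S0 I0 c t1 = wf S0 I0 c t2 -> t1 = t2.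
Proof.
  intros HI Hc E. destruct (Rtotal_order t1 t2) as [h|[h|h]]; auto.
  - pose proof (wf_lt S0 I0 c _ _ HI Hc h). lra.
  - pose proof (wf_lt S0 I0 c _ _ HI Hc h). lra.
Qed.

Definition tinv (S0 I0 c v : R) := ln ((v - S0) / I0) / c.

Lemma wf_tinv S0 I0 c v : 0 < I0 -> 0 < c -> S0 < v -> wf S0 I0 c (tinv S0 I0 c v) = v.
Proof.
  intros HI Hc Hv. unfold wf, tinv.
  replace (c * (ln ((v - S0) / I0) / c)) with (ln ((v - S0) / I0)) by (field; lra).
  rewrite exp_ln. field. lra. apply Rdiv_lt_0_compat; lra.
Qed.

Lemma tinv_pos S0 I0 c v : 0 < I0 -> 0 < c -> S0 + I0 < v -> 0 < tinv S0 I0 c v.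
Proof.
  intros HI Hc Hv. unfold tinv. apply Rdiv_lt_0_compat; [|exact Hc].
  rewrite <- ln_1. apply ln_increasing; [lra|].
  apply (Rmult_lt_reg_r I0); [exact HI|]. unfold Rdiv. rewrite Rmult_assoc, Rinv_l; lra.
Qed.

Lemma wf_gt1 S0 I0 c t : 0 < I0 -> 0 < c -> S0 + I0 = 1 -> 0 < t -> 1 < wf S0 I0 c t.
Proof.
  intros HI Hc Hs Ht. replace 1 with (wf S0 I0 c 0). apply wf_lt; auto.
  unfold wf. rewrite Rmult_0_r, exp_0. lra.
Qed.

Lemma Pw_pos k v : 0 < Pw k v.
Proof. apply exp_pos. Qed.

Definition HYP alpha beta S0 I0 (S I Rm : R -> R) :=
  0 < alpha /\ alpha < beta /\ 0 < I0 /\ I0 < S0 /\ S0 + I0 = 1 /\ alpha / beta < S0 /\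
  SIR_solution alpha beta S0 I0 S I Rm.

Lemma forms alpha beta S0 I0 S I Rm : HYP alpha beta S0 I0 S I Rm ->
  forall t, 0 <= t ->
    let w := wf S0 I0 (beta - alpha) t in let P := Pw (beta / (beta - alpha)) w in
    S t = S0 * P /\ I t = (w - S0) * P /\ Rm t = 1 - w * P.
Proof.
  intros [Ha [Hab [HI [HIS [Hs [Hab2 Hsol]]]]]] t Ht. cbv zeta.
  destruct (formulas alpha beta S0 I0 S I Rm Ha Hab HI ltac:(lra) Hs Hsol t Ht) as [F1 [F2 F3]].
  assert (E : I0 * exp ((beta - alpha) * t) = wf S0 I0 (beta - alpha) t - S0) by (unfold wf; ring).
  rewrite E in F2. split; [exact F1|split; [exact F2|]]. rewrite F3, F1, F2. ring.
Qed.

Lemma sign_pos a b w : 0 < w -> b * w < a -> 0 < a / w - b.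
Proof. intros Hw H. replace (a / w - b) with ((a - b * w) / w) by (field; lra).
  apply Rdiv_lt_0_compat; lra. Qed.

Lemma sign_neg a b w : 0 < w -> a < b * w -> a / w - b < 0.
Proof. intros Hw H. replace (a / w - b) with ((a - b * w) / w) by (field; lra).
  apply Ropp_lt_cancel. rewrite Ropp_0. replace (- ((a - b * w) / w)) with ((b * w - a) / w) by (field; lra).
  apply Rdiv_lt_0_compat; lra. Qed.

Lemma derivs alpha beta S0 I0 S I Rm : HYP alpha beta S0 I0 S I Rm ->
  forall t, 0 < t ->
  is_derive I t (I t * (beta * S0 / wf S0 I0 (beta - alpha) t - alpha)) /\
  is_derive (fun s => S s - Rm s) t (- (beta * S t * I t / (S t + I t)) - alpha * I t) /\
  is_derive (fun s => I s - Rm s) t (I t * (beta * S0 / wf S0 I0 (beta - alpha) t - 2 * alpha)).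
Proof.
  intros Hy t Ht. pose proof Hy as [Ha [Hab [HI [HIS [Hs [Hab2 Hsol]]]]]].
  destruct (forms alpha beta S0 I0 S I Rm Hy t ltac:(lra)) as [F1 [F2 F3]].
  cbv zeta in F1, F2, F3.
  destruct Hsol as [_ [_ [_ [_ [_ [_ HD]]]]]].
  destruct (HD t Ht) as [dS [dI dR]].
  set (w := wf S0 I0 (beta - alpha) t) in *.
  set (P := Pw (beta / (beta - alpha)) w) in *.
  assert (Hw : 1 < w) by (apply wf_gt1; auto; lra).
  assert (HP : 0 < P) by apply Pw_pos.
  assert (Q : beta * S t * I t / (S t + I t) = I t * (beta * S0 / w)).
  { rewrite F1, F2. field. split; [lra|]. replace (S0 * P + (w - S0) * P) with (w * P) by ring.
    apply Rgt_not_eq. apply Rmult_lt_0_compat; lra. }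
  split; [|split].
  - eapply D_eq; [exact dI|]. toR. rewrite Q. ring.
  - apply D_minus; auto.
  - eapply D_eq; [apply D_minus; [exact dI|exact dR]|]. toR. rewrite Q. ring.
Qed.

Lemma peak alpha beta S0 I0 S I Rm : HYP alpha beta S0 I0 S I Rm ->
  let ts := tinv S0 I0 (beta - alpha) (beta * S0 / alpha) in
  0 < ts /\ wf S0 I0 (beta - alpha) ts = beta * S0 / alpha /\
  I 0 <= I ts /\ (forall t, 0 < t -> t <> ts -> I t < I ts).
Proof.
  intros Hy ts. pose proof Hy as [Ha [Hab [HI [HIS [Hs [Hab2 Hsol]]]]]].
  set (c := beta - alpha) in *. assert (Hc : 0 < c) by (unfold c; lra).
  assert (Hv : 1 < beta * S0 / alpha).
  { assert (A1 : alpha < beta * S0).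
    { apply (Rmult_lt_compat_l beta) in Hab2; [|lra]. replace (beta * (alpha/beta)) with alpha in Hab2 by (field; lra). exact Hab2. }
    apply (Rmult_lt_reg_r alpha); [lra|]. replace (beta * S0 / alpha * alpha) with (beta*S0) by (field; lra). lra. }
  assert (Hts : 0 < ts) by (apply tinv_pos; auto; lra).
  assert (Wts : wf S0 I0 c ts = beta * S0 / alpha) by (apply wf_tinv; auto; lra).
  assert (Up : forall t, 0 < t < ts -> I t < I ts).
  { intros t Ht. destruct (mvt I (fun x => I x * (beta * S0 / wf S0 I0 c x - alpha)) t ts (proj2 Ht)) as [xi [Hxi E]].
    - intros x Hx. apply (derivs alpha beta S0 I0 S I Rm Hy x). lra.
    - assert (0 < I xi) by (apply (positivity alpha beta S0 I0 S I Rm); auto; lra).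
      assert (0 < beta * S0 / wf S0 I0 c xi - alpha).
      { apply sign_pos. pose proof (wf_gt1 S0 I0 c xi HI Hc Hs). lra.
        pose proof (wf_lt S0 I0 c xi ts HI Hc (proj2 Hxi)). rewrite Wts in H0.
        apply (Rmult_lt_reg_r (/ alpha)); [apply Rinv_0_lt_compat; lra|].
        replace (alpha * wf S0 I0 c xi * / alpha) with (wf S0 I0 c xi) by (field; lra). exact H0. }
      assert (0 < I xi * (beta * S0 / wf S0 I0 c xi - alpha) * (ts - t)).
      { apply Rmult_lt_0_compat; [apply Rmult_lt_0_compat|]; lra. }
      lra. }
  assert (Down : forall t, ts < t -> I t < I ts).
  { intros t Ht. destruct (mvt I (fun x => I x * (beta * S0 / wf S0 I0 c x - alpha)) ts t Ht) as [xi [Hxi E]].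
    - intros x Hx. apply (derivs alpha beta S0 I0 S I Rm Hy x). lra.
    - assert (0 < I xi) by (apply (positivity alpha beta S0 I0 S I Rm); auto; lra).
      assert (beta * S0 / wf S0 I0 c xi - alpha < 0).
      { apply sign_neg. pose proof (wf_gt1 S0 I0 c xi HI Hc Hs). lra.
        pose proof (wf_lt S0 I0 c ts xi HI Hc (proj1 Hxi)). rewrite Wts in H0.
        apply (Rmult_lt_reg_r (/ alpha)); [apply Rinv_0_lt_compat; lra|].
        replace (alpha * wf S0 I0 c xi * / alpha) with (wf S0 I0 c xi) by (field; lra). exact H0. }
      assert (0 < I xi * (-(beta * S0 / wf S0 I0 c xi - alpha)) * (t - ts)).
      { apply Rmult_lt_0_compat; [apply Rmult_lt_0_compat|]; lra. }
      lra. }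
  split; [exact Hts|split; [exact Wts|split]].
  - destruct (Rle_lt_dec (I 0) (I ts)) as [h|h]; [exact h|exfalso].
    destruct Hsol as [_ [E1 [_ [_ [LI _]]]]].
    assert (L : filterlim (fun s => I s - I ts) (at_right 0) (locally (I 0 - I ts))).
    { apply lim_minus; [rewrite E1; exact LI|]. apply filterlim_const. }
    destruct (right_pos _ _ L ltac:(lra)) as [d [Hd Pd]].
    set (s := Rmin d ts / 2).
    assert (0 < s < d /\ s < ts).
    { unfold s. pose proof (Rmin_l d ts). pose proof (Rmin_r d ts).
      assert (0 < Rmin d ts) by (apply Rmin_glb_lt; lra). lra. }
    pose proof (Pd s ltac:(lra)). pose proof (Up s ltac:(lra)). lra.
  - intros t Ht Hne. destruct (Rtotal_order t ts) as [h|[h|h]].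
    + apply Up; lra.
    + contradiction.
    + apply Down; lra.
Qed.

Lemma SI_char alpha beta S0 I0 S I Rm : HYP alpha beta S0 I0 S I Rm ->
  forall t, 0 <= t -> (S t = I t <-> wf S0 I0 (beta - alpha) t = 2 * S0).
Proof.
  intros Hy t Ht. destruct (forms alpha beta S0 I0 S I Rm Hy t Ht) as [F1 [F2 F3]]. cbv zeta in *.
  rewrite F1, F2. pose proof (Pw_pos (beta / (beta - alpha)) (wf S0 I0 (beta - alpha) t)).
  split; intro E.
  - apply Rmult_eq_reg_r in E; lra.
  - replace (wf S0 I0 (beta - alpha) t - S0) with S0 by lra. reflexivity.
Qed.

Lemma meet_SI alpha beta S0 I0 S I Rm : HYP alpha beta S0 I0 S I Rm -> meet_exactly_once S I.
Proof.
  intros Hy. pose proof Hy as [Ha [Hab [HI [HIS [Hs [Hab2 Hsol]]]]]].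
  assert (Hc : 0 < beta - alpha) by lra.
  exists (tinv S0 I0 (beta - alpha) (2 * S0)).
  assert (P0 : 0 < tinv S0 I0 (beta - alpha) (2 * S0)) by (apply tinv_pos; lra).
  split.
  - split; [exact P0|]. apply (SI_char alpha beta S0 I0 S I Rm Hy); [lra|].
    apply wf_tinv; lra.
  - intros t' [Ht' E]. apply (SI_char alpha beta S0 I0 S I Rm Hy) in E; [|lra].
    apply (wf_inj S0 I0 (beta - alpha)); auto. rewrite E. symmetry. apply wf_tinv; lra.
Qed.

Lemma exists_T alpha beta S0 I0 S I Rm : HYP alpha beta S0 I0 S I Rm ->
  exists T, 0 < T /\ 1 < wf S0 I0 (beta - alpha) T /\
    2 * (wf S0 I0 (beta - alpha) T * Pw (beta / (beta - alpha)) (wf S0 I0 (beta - alpha) T)) < 1.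
Proof.
  intros Hy. pose proof Hy as [Ha [Hab [HI [HIS [Hs [Hab2 Hsol]]]]]].
  assert (Hc : 0 < beta - alpha) by lra.
  set (k := beta / (beta - alpha)).
  assert (Hk : k - 1 = alpha / (beta - alpha)) by (unfold k; field; lra).
  assert (Hk1 : 0 < k - 1) by (rewrite Hk; apply Rdiv_lt_0_compat; lra).
  assert (Hl2 : 0 < ln 2) by (rewrite <- ln_1; apply ln_increasing; lra).
  set (V := exp (ln 2 / (k - 1) + 1)).
  assert (HV : 1 < V).
  { unfold V. assert (0 < ln 2 / (k - 1)) by (apply Rdiv_lt_0_compat; lra).
    assert (E : exp 0 < exp (ln 2 / (k - 1) + 1)) by (apply exp_increasing; lra).
    rewrite exp_0 in E. exact E. }
  exists (tinv S0 I0 (beta - alpha) V).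
  rewrite wf_tinv by lra.
  split; [apply tinv_pos; lra|split; [exact HV|]].
  unfold Pw. replace (V * exp (- k * ln V)) with (exp ((1 - k) * ln V)).
  - unfold V. rewrite ln_exp.
    replace ((1 - k) * (ln 2 / (k - 1) + 1)) with (- ln 2 + - (k - 1)) by (field; lra).
    rewrite exp_plus, exp_Ropp, exp_ln by lra.
    assert (E : exp (- (k - 1)) < exp 0) by (apply exp_increasing; lra). rewrite exp_0 in E.
    lra.
  - replace ((1 - k) * ln V) with (ln V + - k * ln V) by ring. rewrite exp_plus, exp_ln by lra. reflexivity.
Qed.

Lemma h_cont S0 I0 c k (g : R -> R -> R) : 0 < S0 -> 0 < I0 ->
  (forall x, ex_derive (fun t => g (wf S0 I0 c t) (Pw k (wf S0 I0 c t))) x) ->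
  continuity (fun t => g (wf S0 I0 c t) (Pw k (wf S0 I0 c t))).
Proof. intros _ _ H x. apply ex_deriv_cont. apply H. Qed.

Lemma SR_decr alpha beta S0 I0 S I Rm : HYP alpha beta S0 I0 S I Rm ->
  forall t1 t2, 0 < t1 -> t1 < t2 -> S t2 - Rm t2 < S t1 - Rm t1.
Proof.
  intros Hy t1 t2 H1 H12. pose proof Hy as [Ha [Hab [HI [HIS [Hs [Hab2 Hsol]]]]]].
  destruct (mvt (fun s => S s - Rm s) (fun x => - (beta * S x * I x / (S x + I x)) - alpha * I x) t1 t2 H12) as [xi [Hxi E]].
  - intros x Hx. apply (derivs alpha beta S0 I0 S I Rm Hy x). lra.
  - destruct (positivity alpha beta S0 I0 S I Rm Ha Hab HI ltac:(lra) Hs Hsol xi ltac:(lra)) as [Sp Ip].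
    assert (0 < beta * S xi * I xi / (S xi + I xi)).
    { apply Rdiv_lt_0_compat; [apply Rmult_lt_0_compat; [apply Rmult_lt_0_compat|]|]; lra. }
    assert (0 < (beta * S xi * I xi / (S xi + I xi) + alpha * I xi) * (t2 - t1)).
    { apply Rmult_lt_0_compat; [|lra]. assert (0 < alpha * I xi) by (apply Rmult_lt_0_compat; lra). lra. }
    lra.
Qed.

Lemma meet_SR alpha beta S0 I0 S I Rm : HYP alpha beta S0 I0 S I Rm -> meet_exactly_once S Rm.
Proof.
  intros Hy. pose proof Hy as [Ha [Hab [HI [HIS [Hs [Hab2 Hsol]]]]]].
  assert (Hc : 0 < beta - alpha) by lra.
  destruct (exists_T alpha beta S0 I0 S I Rm Hy) as [T [HT [HwT HPT]]].
  set (k := beta / (beta - alpha)) in *.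
  set (h := fun t => - (S0 * Pw k (wf S0 I0 (beta - alpha) t) - (1 - wf S0 I0 (beta - alpha) t * Pw k (wf S0 I0 (beta - alpha) t)))).
  assert (Hh : forall t, 0 <= t -> h t = - (S t - Rm t)).
  { intros t Ht. destruct (forms alpha beta S0 I0 S I Rm Hy t Ht) as [F1 [F2 F3]]. cbv zeta in *.
    unfold h. rewrite F1, F3. reflexivity. }
  destruct Hsol as [E0 [E1 [E2 _]]].
  destruct (IVT h 0 T) as [z [Hz Ez]].
  - intro x. apply ex_deriv_cont. unfold h, Pw, wf. auto_derive.
    pose proof (exp_pos ((beta - alpha) * x)). nra.
  - exact HT.
  - rewrite Hh by lra. rewrite E0, E2. lra.
  - unfold h. pose proof (Pw_pos k (wf S0 I0 (beta - alpha) T)).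
    assert (S0 * Pw k (wf S0 I0 (beta - alpha) T) < wf S0 I0 (beta - alpha) T * Pw k (wf S0 I0 (beta - alpha) T)).
    { apply Rmult_lt_compat_r; lra. }
    lra.
  - assert (Hz0 : 0 < z).
    { destruct (Rle_lt_or_eq_dec 0 z (proj1 Hz)) as [h0|h0]; [exact h0|].
      subst z. rewrite Hh in Ez by lra. rewrite E0, E2 in Ez. lra. }
    exists z. split.
    + split; [exact Hz0|]. rewrite Hh in Ez by lra. lra.
    + intros t' [Ht' E']. destruct (Rtotal_order t' z) as [o|[o|o]]; auto; exfalso.
      * pose proof (SR_decr alpha beta S0 I0 S I Rm Hy t' z Ht' o). rewrite Hh in Ez by lra. lra.
      * pose proof (SR_decr alpha beta S0 I0 S I Rm Hy z t' Hz0 o). rewrite Hh in Ez by lra. lra.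
Qed.

Lemma IR_unique alpha beta S0 I0 S I Rm : HYP alpha beta S0 I0 S I Rm ->
  forall t1 t2, 0 < t1 -> t1 < t2 -> I t1 = Rm t1 -> I t2 = Rm t2 -> False.
Proof.
  intros Hy t1 t2 H1 H12 E1 E2. pose proof Hy as [Ha [Hab [HI [HIS [Hs [Hab2 Hsol]]]]]].
  assert (Hc : 0 < beta - alpha) by lra.
  set (w := wf S0 I0 (beta - alpha)) in *.
  set (df := fun x => I x * (beta * S0 / w x - 2 * alpha)).
  assert (Dd : forall x, 0 < x -> is_derive (fun s => I s - Rm s) x (df x)).
  { intros x Hx. apply (derivs alpha beta S0 I0 S I Rm Hy x Hx). }
  assert (Ipos : forall x, 0 < x -> 0 < I x).
  { intros x Hx. apply (positivity alpha beta S0 I0 S I Rm); auto; lra. }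
  destruct (Rle_lt_dec (2 * alpha * w t1) (beta * S0)) as [Hle|Hgt].
  - (* increasing before t1 *)
    destruct Hsol as [_ [EI [ER [_ [LI [LR _]]]]]].
    assert (L : filterlim (fun s => I s - Rm s) (at_right 0) (locally (I0 - 0))).
    { apply lim_minus; auto. }
    destruct (right_pos _ _ L ltac:(lra)) as [d [Hd Pd]].
    set (s := Rmin d t1 / 2).
    assert (0 < s < d /\ s < t1).
    { unfold s. pose proof (Rmin_l d t1). pose proof (Rmin_r d t1).
      assert (0 < Rmin d t1) by (apply Rmin_glb_lt; lra). lra. }
    pose proof (Pd s ltac:(lra)).
    destruct (mvt (fun s => I s - Rm s) df s t1 ltac:(lra)) as [xi [Hxi E]].
    + intros x Hx. apply Dd. lra.
    + assert (0 < df xi * (t1 - s)).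
      { apply Rmult_lt_0_compat; [|lra]. unfold df. apply Rmult_lt_0_compat; [apply Ipos; lra|].
        apply sign_pos. pose proof (wf_gt1 S0 I0 (beta - alpha) xi HI Hc Hs). unfold w. lra.
        assert (Hw := wf_lt S0 I0 (beta - alpha) xi t1 HI Hc (proj2 Hxi)). fold w in Hw.
        nra. }
      lra.
  - destruct (mvt (fun s => I s - Rm s) df t1 t2 H12) as [xi [Hxi E]].
    + intros x Hx. apply Dd. lra.
    + assert (0 < - df xi * (t2 - t1)).
      { apply Rmult_lt_0_compat; [|lra]. unfold df.
        assert (beta * S0 / w xi - 2 * alpha < 0).
        { apply sign_neg. pose proof (wf_gt1 S0 I0 (beta - alpha) xi HI Hc Hs). unfold w. lra.
          assert (Hw := wf_lt S0 I0 (beta - alpha) t1 xi HI Hc (proj1 Hxi)). fold w in Hw.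
          nra. }
        pose proof (Ipos xi ltac:(lra)). nra. }
      lra.
Qed.

Lemma meet_IR alpha beta S0 I0 S I Rm : HYP alpha beta S0 I0 S I Rm -> meet_exactly_once I Rm.
Proof.
  intros Hy. pose proof Hy as [Ha [Hab [HI [HIS [Hs [Hab2 Hsol]]]]]].
  assert (Hc : 0 < beta - alpha) by lra.
  destruct (exists_T alpha beta S0 I0 S I Rm Hy) as [T [HT [HwT HPT]]].
  set (k := beta / (beta - alpha)) in *.
  set (h := fun t => - ((wf S0 I0 (beta - alpha) t - S0) * Pw k (wf S0 I0 (beta - alpha) t) - (1 - wf S0 I0 (beta - alpha) t * Pw k (wf S0 I0 (beta - alpha) t)))).
  assert (Hh : forall t, 0 <= t -> h t = - (I t - Rm t)).
  { intros t Ht. destruct (forms alpha beta S0 I0 S I Rm Hy t Ht) as [F1 [F2 F3]]. cbv zeta in *.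
    unfold h. rewrite F2, F3. reflexivity. }
  destruct Hsol as [E0 [E1 [E2 _]]].
  destruct (IVT h 0 T) as [z [Hz Ez]].
  - intro x. apply ex_deriv_cont. unfold h, Pw, wf. auto_derive.
    pose proof (exp_pos ((beta - alpha) * x)). nra.
  - exact HT.
  - rewrite Hh by lra. rewrite E1, E2. lra.
  - unfold h. pose proof (Pw_pos k (wf S0 I0 (beta - alpha) T)).
    assert (0 < S0 * Pw k (wf S0 I0 (beta - alpha) T)) by (apply Rmult_lt_0_compat; lra).
    lra.
  - assert (Hz0 : 0 < z).
    { destruct (Rle_lt_or_eq_dec 0 z (proj1 Hz)) as [h0|h0]; [exact h0|].
      subst z. rewrite Hh in Ez by lra. rewrite E1, E2 in Ez. lra. }
    exists z. split.
    + split; [exact Hz0|]. rewrite Hh in Ez by lra. lra.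
    + intros t' [Ht' E']. rewrite Hh in Ez by lra.
      destruct (Rtotal_order t' z) as [o|[o|o]]; auto; exfalso.
      * apply (IR_unique alpha beta S0 I0 S I Rm Hy t' z); auto; lra.
      * apply (IR_unique alpha beta S0 I0 S I Rm Hy z t'); auto; lra.
Qed.

Lemma peak_unique alpha beta S0 I0 S I Rm : HYP alpha beta S0 I0 S I Rm ->
  forall tp, is_peak_time I tp <-> tp = tinv S0 I0 (beta - alpha) (beta * S0 / alpha).
Proof.
  intros Hy tp. destruct (peak alpha beta S0 I0 S I Rm Hy) as [P0 [PW [PI0 PS]]].
  set (ts := tinv S0 I0 (beta - alpha) (beta * S0 / alpha)) in *.
  split.
  - intros [Htp Hmax]. destruct (Req_dec tp ts) as [e|ne]; [exact e|exfalso].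
    pose proof (PS tp Htp ne). pose proof (Hmax ts ltac:(lra)). lra.
  - intros ->. split; [exact P0|]. intros t Ht.
    destruct (Rle_lt_or_eq_dec 0 t Ht) as [h|h].
    + destruct (Req_dec t ts) as [e|ne]; [subst; lra|]. left. apply PS; auto.
    + subst t. exact PI0.
Qed.

Lemma common_char alpha beta S0 I0 S I Rm : HYP alpha beta S0 I0 S I Rm ->
  forall t, 0 <= t -> wf S0 I0 (beta - alpha) t = 2 * S0 ->
  (I t = Rm t <-> 3 * S0 * Pw (beta / (beta - alpha)) (2 * S0) = 1).
Proof.
  intros Hy t Ht Hw. destruct (forms alpha beta S0 I0 S I Rm Hy t Ht) as [F1 [F2 F3]]. cbv zeta in *.
  rewrite F2, F3, Hw. split; intro E; lra.
Qed.

Lemma exp_m2ln x : 0 < x -> exp (- 2 * ln x) = / (x * x).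
Proof.
  intro Hx. replace (- 2 * ln x) with (- (ln x + ln x)) by ring.
  rewrite exp_Ropp, exp_plus, exp_ln by exact Hx. reflexivity.
Qed.

Lemma key alpha beta S0 I0 S I Rm : HYP alpha beta S0 I0 S I Rm ->
  (3 * S0 * Pw (beta / (beta - alpha)) (2 * S0) = 1 <->
   ln 3 + ln S0 = beta / alpha * (ln 3 - ln 2)).
Proof.
  intros Hy. pose proof Hy as [Ha [Hab [HI [HIS [Hs [Hab2 Hsol]]]]]].
  set (k := beta / (beta - alpha)).
  assert (A : 3 * S0 * Pw k (2 * S0) = 1 <-> k * (ln 2 + ln S0) = ln 3 + ln S0).
  { unfold Pw. rewrite <- (ln_mult 2 S0), <- (ln_mult 3 S0) by lra. split.
    - intro E. assert (E2 : exp (- k * ln (2 * S0)) = / (3 * S0)) by (replace (/ (3 * S0)) with (1 / (3 * S0)) by (field; lra); rewrite <- E; field; lra).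
      apply (f_equal ln) in E2. rewrite ln_exp, ln_Rinv in E2 by lra. lra.
    - intro E. replace (- k * ln (2 * S0)) with (- ln (3 * S0)) by lra.
      rewrite exp_Ropp, exp_ln by lra. field. lra. }
  rewrite A. unfold k. split; intro E.
  - assert (E' : beta * (ln 2 + ln S0) = (beta - alpha) * (ln 3 + ln S0)).
    { rewrite <- E. field. lra. }
    apply (Rmult_eq_reg_l alpha); [|lra].
    replace (alpha * (beta / alpha * (ln 3 - ln 2))) with (beta * (ln 3 - ln 2)) by (field; lra).
    nra.
  - assert (E' : alpha * (ln 3 + ln S0) = beta * (ln 3 - ln 2)).
    { rewrite E. field. lra. }
    apply (Rmult_eq_reg_l (beta - alpha)); [|lra].
    replace ((beta - alpha) * (beta / (beta - alpha) * (ln 2 + ln S0))) with (beta * (ln 2 + ln S0)) by (field; lra).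
    nra.
Qed.

Lemma formula_S0 S0 m : 0 < S0 ->
  (S0 = 1 / 3 * Rpower (3 / 2) m <-> ln 3 + ln S0 = m * (ln 3 - ln 2)).
Proof.
  intros HS. unfold Rpower. rewrite ln_div by lra. split; intro E.
  - rewrite <- ln_mult by lra. rewrite E. replace (3 * (1 / 3 * exp (m * (ln 3 - ln 2)))) with (exp (m * (ln 3 - ln 2))) by field.
    apply ln_exp.
  - rewrite <- E. rewrite exp_plus, !exp_ln by lra. field.
Qed.

Lemma part_ii alpha beta S0 I0 S I Rm : HYP alpha beta S0 I0 S I Rm ->
  ((exists t, 0 < t /\ S t = I t /\ I t = Rm t) <->
     (beta / alpha < ln 3 / (ln 3 - ln 2) /\
      S0 = 1 / 3 * Rpower (3 / 2) (beta / alpha))).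
Proof.
  intros Hy. pose proof Hy as [Ha [Hab [HI [HIS [Hs [Hab2 Hsol]]]]]].
  assert (Hc : 0 < beta - alpha) by lra.
  assert (Hl : ln 2 < ln 3) by (apply ln_increasing; lra).
  rewrite (formula_S0 S0 (beta / alpha)) by lra.
  rewrite <- (key alpha beta S0 I0 S I Rm Hy).
  split.
  - intros [t [Ht [E1 E2]]].
    apply (SI_char alpha beta S0 I0 S I Rm Hy t) in E1; [|lra].
    apply (common_char alpha beta S0 I0 S I Rm Hy t) in E2; [|lra|exact E1].
    split; [|exact E2].
    apply (key alpha beta S0 I0 S I Rm Hy) in E2.
    assert (ln S0 < 0) by (rewrite <- ln_1; apply ln_increasing; lra).
    apply (Rmult_lt_reg_r (ln 3 - ln 2)); [lra|].
    replace (ln 3 / (ln 3 - ln 2) * (ln 3 - ln 2)) with (ln 3) by (field; lra). lra.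
  - intros [_ E].
    set (t := tinv S0 I0 (beta - alpha) (2 * S0)).
    assert (Ht : 0 < t) by (apply tinv_pos; lra).
    assert (Hw : wf S0 I0 (beta - alpha) t = 2 * S0) by (apply wf_tinv; lra).
    exists t. split; [exact Ht|split].
    + apply (SI_char alpha beta S0 I0 S I Rm Hy t); [lra|exact Hw].
    + apply (common_char alpha beta S0 I0 S I Rm Hy t); [lra|exact Hw|exact E].
Qed.

Lemma part_i alpha beta S0 I0 S I Rm : HYP alpha beta S0 I0 S I Rm ->
  forall tp ts, is_peak_time I tp -> 0 < ts -> S ts = I ts ->
     (2 * alpha < beta -> ts < tp) /\
     (beta = 2 * alpha -> ts = tp) /\
     (beta < 2 * alpha -> tp < ts).
Proof.
  intros Hy tp ts Hp Hts E. pose proof Hy as [Ha [Hab [HI [HIS [Hs [Hab2 Hsol]]]]]].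
  assert (Hc : 0 < beta - alpha) by lra.
  apply (peak_unique alpha beta S0 I0 S I Rm Hy) in Hp.
  destruct (peak alpha beta S0 I0 S I Rm Hy) as [P0 [PW _]]. rewrite <- Hp in PW, P0.
  apply (SI_char alpha beta S0 I0 S I Rm Hy ts) in E; [|lra].
  assert (V : beta * S0 / alpha * alpha = beta * S0) by (field; lra).
  set (v := beta * S0 / alpha) in *.
  split; [|split]; intro H.
  - destruct (Rlt_le_dec ts tp) as [h|h]; [exact h|exfalso].
    pose proof (wf_le S0 I0 (beta - alpha) tp ts HI Hc h). nra.
  - apply (wf_inj S0 I0 (beta - alpha)); auto. rewrite E, PW. subst beta. nra.
  - destruct (Rlt_le_dec tp ts) as [h|h]; [exact h|exfalso].
    pose proof (wf_le S0 I0 (beta - alpha) ts tp HI Hc h). nra.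
Qed.

Lemma part_iii alpha beta S0 I0 S I Rm : HYP alpha beta S0 I0 S I Rm ->
  forall tp, is_peak_time I tp ->
     ((S tp = I tp /\ I tp = Rm tp) <-> (beta = 2 * alpha /\ S0 = 3 / 4)).
Proof.
  intros Hy tp Hp. pose proof Hy as [Ha [Hab [HI [HIS [Hs [Hab2 Hsol]]]]]].
  assert (Hc : 0 < beta - alpha) by lra.
  apply (peak_unique alpha beta S0 I0 S I Rm Hy) in Hp.
  destruct (peak alpha beta S0 I0 S I Rm Hy) as [P0 [PW _]]. rewrite <- Hp in PW, P0.
  assert (V : beta * S0 / alpha * alpha = beta * S0) by (field; lra).
  split.
  - intros [E1 E2].
    apply (SI_char alpha beta S0 I0 S I Rm Hy tp) in E1; [|lra].
    apply (common_char alpha beta S0 I0 S I Rm Hy tp) in E2; [|lra|exact E1].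
    assert (Hb : beta = 2 * alpha).
    { rewrite PW in E1. set (v := beta * S0 / alpha) in *. nra. }
    split; [exact Hb|].
    replace (beta / (beta - alpha)) with 2 in E2 by (subst beta; field; lra).
    unfold Pw in E2. rewrite exp_m2ln in E2 by lra.
    assert (E3 : 3 * S0 = 2 * S0 * (2 * S0)).
    { assert (Hn: 0 < 2*S0*(2*S0)) by nra. apply (Rmult_eq_reg_r (/ (2*S0*(2*S0)))); [|apply Rgt_not_eq, Rinv_0_lt_compat; exact Hn]. rewrite E2. field. lra. }
    nra.
  - intros [Hb HS0].
    assert (Hw : wf S0 I0 (beta - alpha) tp = 2 * S0).
    { rewrite PW. subst beta. field. lra. }
    split.
    + apply (SI_char alpha beta S0 I0 S I Rm Hy tp); [lra|exact Hw].
    + apply (common_char alpha beta S0 I0 S I Rm Hy tp); [lra|exact Hw|].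
      replace (beta / (beta - alpha)) with 2 by (subst beta; field; lra).
      unfold Pw. rewrite exp_m2ln by lra. rewrite HS0. field.
Qed.


Theorem proposition2 (alpha beta S0 I0 : R) (S I Rm : R -> R) :
  0 < alpha -> 0 < beta -> alpha < beta ->
  0 < I0 -> I0 < S0 -> S0 + I0 = 1 -> alpha / beta < S0 ->
  SIR_solution alpha beta S0 I0 S I Rm ->
  meet_exactly_once S I /\ meet_exactly_once S Rm /\ meet_exactly_once I Rm /\
  (exists tp, is_peak_time I tp /\
     forall t, is_peak_time I t -> t = tp) /\
  (forall tp ts, is_peak_time I tp -> 0 < ts -> S ts = I ts ->
     (2 * alpha < beta -> ts < tp) /\
     (beta = 2 * alpha -> ts = tp) /\
     (beta < 2 * alpha -> tp < ts)) /\
  ((exists t, 0 < t /\ S t = I t /\ I t = Rm t) <->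
     (beta / alpha < ln 3 / (ln 3 - ln 2) /\
      S0 = 1 / 3 * Rpower (3 / 2) (beta / alpha))) /\
  (forall tp, is_peak_time I tp ->
     ((S tp = I tp /\ I tp = Rm tp) <-> (beta = 2 * alpha /\ S0 = 3 / 4))).
Proof.
  intros Ha Hb Hab HI HIS Hs Hab2 Hsol.
  assert (Hy : HYP alpha beta S0 I0 S I Rm) by exact (conj Ha (conj Hab (conj HI (conj HIS (conj Hs (conj Hab2 Hsol)))))).
  split; [exact (meet_SI _ _ _ _ _ _ _ Hy)|].
  split; [exact (meet_SR _ _ _ _ _ _ _ Hy)|].
  split; [exact (meet_IR _ _ _ _ _ _ _ Hy)|].
  split.
  { exists (tinv S0 I0 (beta - alpha) (beta * S0 / alpha)). split.
    - apply (peak_unique _ _ _ _ _ _ _ Hy). reflexivity.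
    - intros t Ht. apply (peak_unique _ _ _ _ _ _ _ Hy). exact Ht. }
  split; [exact (part_i _ _ _ _ _ _ _ Hy)|].
  split; [exact (part_ii _ _ _ _ _ _ _ Hy)|].
  exact (part_iii _ _ _ _ _ _ _ Hy).
Qed.
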